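(* Let $M$ be a preordered commutative monoid (written multiplicatively, with unit $1$) such that $x\ge 1$ for all $x\in M$, and let $g\in M$ be a generator. For $x,y\in M$ and $r\in\mathbb{R}_{\ge 0}$ the following are equivalent: (1) $r$ is a regularized rate from $x$ to $y$; (2) for every $\delta>0$ there exists $n\in\mathbb{N}$, $n\ge 1$, such that $x^n g^{\lfloor\delta n\rfloor}\ge y^{\lceil rn\rceil}$.
   Context: A preordered commutative monoid is a set $M$ with an associative, commutative binary operation with neutral element $1$, and a reflexive transitive relation $\le$ such that $x\ge y$ implies $xz\ge yz$ for all $x,y,z$. An element $g\in M$ is a generator if for every $x\in M$ there is $n\in\mathbb{N}$ with $g^n\ge x$. Given a generator $g$, a number $r\in\mathbb{R}_{\ge0}$ is a regularized rate from $x$ to $y$ if for every $\delta>0$ and every neighbourhood $U$ of $r$ there are $m,n\in\mathbb{N}$ with $\frac{m}{n}\in U$ and $d\in\mathbb{N}$ with $d\le\delta\max(m,n)$ such that $x^n g^d\ge y^m$. *)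

(* Defs.v *)
From Stdlib Require Import Reals Lra Lia.
Open Scope R_scope.

(* A preordered commutative monoid (written multiplicatively).
   [pcm_le x y] means x <= y, so "x >= y" is [pcm_le y x]. *)
Record PCMonoid := {
  pcm_car :> Type;
  pcm_mul : pcm_car -> pcm_car -> pcm_car;
  pcm_one : pcm_car;
  pcm_le : pcm_car -> pcm_car -> Prop;
  pcm_mulA : forall x y z, pcm_mul x (pcm_mul y z) = pcm_mul (pcm_mul x y) z;
  pcm_mulC : forall x y, pcm_mul x y = pcm_mul y x;
  pcm_mul1 : forall x, pcm_mul pcm_one x = x;
  pcm_refl : forall x, pcm_le x x;
  pcm_trans : forall x y z, pcm_le x y -> pcm_le y z -> pcm_le x z;
  pcm_mono : forall x y z, pcm_le y x -> pcm_le (pcm_mul y z) (pcm_mul x z)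
}.

Arguments pcm_mul {_} _ _.
Arguments pcm_one {_}.
Arguments pcm_le {_} _ _.

Fixpoint pcm_pow {M : PCMonoid} (x : M) (n : nat) : M :=
  match n with
  | O => pcm_one
  | S k => pcm_mul x (pcm_pow x k)
  end.

Definition pcm_ge {M : PCMonoid} (x y : M) : Prop := pcm_le y x.

Definition is_generator {M : PCMonoid} (g : M) : Prop :=
  forall x : M, exists n : nat, pcm_ge (pcm_pow g n) x.

(* r is a regularized rate from x to y (w.r.t. generator g).  A neighbourhood
   U of r in R is rendered by the open balls (r - eps, r + eps), eps > 0;
   m/n is only meaningful for n >= 1. *)
Definition regularized_rate {M : PCMonoid} (g x y : M) (r : R) : Prop :=
  forall delta : R, 0 < delta ->
  forall eps : R, 0 < eps ->
  exists m n : nat, (0 < n)%nat /\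
    Rabs (INR m / INR n - r) < eps /\
    exists d : nat, INR d <= delta * INR (Nat.max m n) /\
      pcm_ge (pcm_mul (pcm_pow x n) (pcm_pow g d)) (pcm_pow y m).

(* floor and ceiling as natural numbers (for nonnegative arguments).
   Int_part t = up t - 1 is the floor of t. *)
Definition nat_floor (t : R) : nat := Z.to_nat (Int_part t).
Definition nat_ceil (t : R) : nat := Z.to_nat (- Int_part (- t)).

(* Main.v *)
Require Import Defs.
From Stdlib Require Import Reals Lra Lia ZArith.
Open Scope R_scope.

Section Mon.
Variable M : PCMonoid.
Implicit Types a b c e : M.

Lemma mulr1 a : pcm_mul a pcm_one = a.
Proof. rewrite (pcm_mulC M). apply pcm_mul1. Qed.

Lemma le_mul2 a b c e : pcm_le a b -> pcm_le c e -> pcm_le (pcm_mul a c) (pcm_mul b e).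
Proof.
  intros H H'. eapply (pcm_trans M). apply (pcm_mono M b a c H).
  rewrite (pcm_mulC M b c), (pcm_mulC M b e). apply (pcm_mono M e c b H').
Qed.

Lemma mulACA a b c e : pcm_mul (pcm_mul a b) (pcm_mul c e) = pcm_mul (pcm_mul a c) (pcm_mul b e).
Proof.
  rewrite <- (pcm_mulA M a b). rewrite (pcm_mulA M b c e), (pcm_mulC M b c).
  rewrite <- (pcm_mulA M c b e). rewrite (pcm_mulA M a c). reflexivity.
Qed.

Lemma pow_add a i j : pcm_pow a (i + j) = pcm_mul (pcm_pow a i) (pcm_pow a j).
Proof.
  induction i; simpl. now rewrite pcm_mul1.
  rewrite IHi. apply pcm_mulA.
Qed.

Lemma pow_mulD a b n : pcm_pow (pcm_mul a b) n = pcm_mul (pcm_pow a n) (pcm_pow b n).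
Proof.
  induction n; simpl. now rewrite pcm_mul1.
  rewrite IHn. apply mulACA.
Qed.

Lemma pow_mul a t n : pcm_pow a (t * n) = pcm_pow (pcm_pow a n) t.
Proof.
  induction t; simpl; auto. rewrite pow_add, IHt. reflexivity.
Qed.

Lemma le_pow a b n : pcm_le a b -> pcm_le (pcm_pow a n) (pcm_pow b n).
Proof.
  intros H; induction n; simpl. apply pcm_refl. now apply le_mul2.
Qed.

Hypothesis H1 : forall x : M, pcm_ge x pcm_one.

Lemma pow_le_exp a i j : (i <= j)%nat -> pcm_le (pcm_pow a i) (pcm_pow a j).
Proof.
  intros H. replace j with (i + (j - i))%nat by lia. rewrite pow_add.
  rewrite <- (mulr1 (pcm_pow a i)) at 1. apply le_mul2. apply pcm_refl. apply H1.
Qed.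

Variables (g x y : M).
Definition P N d m := pcm_le (pcm_pow y m) (pcm_mul (pcm_pow x N) (pcm_pow g d)).

Lemma P_mono N d m N' d' m' : (N <= N')%nat -> (d <= d')%nat -> (m' <= m)%nat ->
  P N d m -> P N' d' m'.
Proof.
  unfold P; intros a b c h. eapply (pcm_trans M). apply pow_le_exp; eauto.
  eapply (pcm_trans M). apply h. apply le_mul2; apply pow_le_exp; auto.
Qed.

Lemma P_pow t N d m : P N d m -> P (t * N) (t * d) (t * m).
Proof.
  unfold P; intros h. rewrite !pow_mul, <- pow_mulD. now apply le_pow.
Qed.

Lemma P_gen k (ee : nat) N d m : pcm_le y (pcm_pow g k) -> P N d m -> P N (d + k * ee) (m + ee).
Proof.
  unfold P; intros hk h. rewrite !pow_add, Nat.mul_comm, pow_mul.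
  rewrite (pcm_mulA M). apply le_mul2; auto. apply le_pow; auto.
Qed.
End Mon.

Lemma floor_spec t : 0 <= t -> INR (nat_floor t) <= t /\ t < INR (nat_floor t) + 1.
Proof.
  intros Ht. unfold nat_floor. destruct (base_Int_part t) as [A B].
  assert (Z0 : (-1 < Int_part t)%Z). { apply lt_IZR. simpl. lra. }
  rewrite INR_IZR_INZ, Z2Nat.id by lia. lra.
Qed.

Lemma ceil_spec t : 0 <= t -> t <= INR (nat_ceil t) /\ INR (nat_ceil t) < t + 1.
Proof.
  intros Ht. unfold nat_ceil. destruct (base_Int_part (- t)) as [A B].
  assert (E : IZR (- Int_part (- t)) = - IZR (Int_part (-t))) by apply opp_IZR.
  assert (Z0 : (0 <= - Int_part (- t))%Z). { apply le_IZR. lra. }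
  rewrite INR_IZR_INZ, Z2Nat.id by lia. lra.
Qed.

Lemma le_floor D a : 0 <= a -> INR D <= a -> (D <= nat_floor a)%nat.
Proof.
  intros h1 h2. destruct (floor_spec a h1) as [_ B].
  assert (INR D < INR (S (nat_floor a))) by (rewrite S_INR; lra).
  apply INR_lt in H. lia.
Qed.

Lemma nat_above a : exists k : nat, a < INR k.
Proof.
  destruct (archimed (Rmax a 0)) as [A _].
  assert (0 < IZR (up (Rmax a 0))) by (generalize (Rmax_r a 0); lra).
  apply lt_0_IZR in H. exists (Z.to_nat (up (Rmax a 0))).
  rewrite INR_IZR_INZ, Z2Nat.id by lia. generalize (Rmax_l a 0); lra.
Qed.

Theorem mainTheorem2 (M : PCMonoid)
  (H1 : forall x : M, pcm_ge x pcm_one)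
  (g : M) (Hg : is_generator g)
  (x y : M) (r : R) (Hr : 0 <= r) :
  regularized_rate g x y r <->
  (forall delta : R, 0 < delta ->
     exists n : nat, (1 <= n)%nat /\
       pcm_ge (pcm_mul (pcm_pow x n) (pcm_pow g (nat_floor (delta * INR n))))
              (pcm_pow y (nat_ceil (r * INR n)))).
Proof.
  split.
  - intros HR delta Hd. destruct (Hg y) as [k Hk].
    set (K := INR k + 1).
    assert (HK : 0 < K) by (unfold K; generalize (pos_INR k); lra).
    set (d1 := delta / (4 * (r + 2))).
    set (ep := Rmin 1 (delta / (4 * K))).
    assert (Hd1 : 0 < d1) by (unfold d1; apply Rdiv_lt_0_compat; lra).
    assert (Hep : 0 < ep).
    { unfold ep. apply Rmin_glb_lt. lra. apply Rdiv_lt_0_compat; lra. }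
    assert (Hep1 : ep <= 1) by apply Rmin_l.
    assert (Hep2 : ep * (4 * K) <= delta).
    { assert (ep <= delta / (4 * K)) by apply Rmin_r.
      assert (delta / (4 * K) * (4 * K) = delta) by (field; lra). nra. }
    assert (Hd1' : d1 * (4 * (r + 2)) = delta) by (unfold d1; field; lra).
    destruct (HR d1 Hd1 ep Hep) as [m [n [Hn [Habs [d [Hdd HP]]]]]].
    apply Rabs_def2 in Habs. destruct Habs as [Ha1 Ha2].
    assert (Hn' : 1 <= INR n) by (apply (le_INR 1); lia).
    assert (Em : INR m = INR m / INR n * INR n) by (field; lra).
    assert (Hm1 : INR m < (r + ep) * INR n) by nra.
    assert (Hm2 : (r - ep) * INR n < INR m) by nra.
    assert (Hmax : INR (Nat.max m n) <= INR m + INR n).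
    { rewrite <- plus_INR. apply le_INR. lia. }
    destruct (nat_above (2 * K / delta)) as [t Ht].
    assert (HtK : 2 * K < INR t * delta).
    { replace (2 * K) with (2 * K / delta * delta) by (field; lra).
      apply Rmult_lt_compat_r; lra. }
    assert (Ht0 : (0 < t)%nat).
    { destruct t. simpl in HtK. lra. lia. }
    exists (t * n)%nat. split. lia.
    set (cv := nat_ceil (r * INR (t * n))).
    set (e := (cv - t * m)%nat).
    unfold pcm_ge. fold (P M g x y (t * n) (nat_floor (delta * INR (t * n))) cv).
    apply (P_mono M H1 g x y (t * n) (t * d + k * e) (t * m + e)); try lia.
    2: { apply P_gen; auto. apply P_pow. exact HP. }
    rewrite mult_INR in *.
    assert (HT : 1 <= INR t) by (apply (le_INR 1); lia).
    apply le_floor. nra.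
    destruct (ceil_spec (r * (INR t * INR n))) as [C1 C2].
    { apply Rmult_le_pos; [lra|apply Rmult_le_pos; apply pos_INR]. }
    assert (He : INR e <= INR t * INR n * ep + 1).
    { unfold e. destruct (le_lt_dec (t * m) cv) as [Hl | Hl].
      - rewrite minus_INR by auto. rewrite mult_INR.
        assert (Ecv : INR cv = INR (nat_ceil (r * (INR t * INR n)))) by (unfold cv; rewrite mult_INR; reflexivity).
        assert (INR t * ((r - ep) * INR n) <= INR t * INR m) by (apply Rmult_le_compat_l; lra).
        lra.
      - replace (cv - t * m)%nat with 0%nat by lia. simpl. nra. }
    rewrite plus_INR, !mult_INR.
    assert (Htd : INR t * INR d <= INR t * INR n * delta / 4).
    { assert (INR d <= d1 * (INR m + INR n)) by (apply Rle_trans with (d1 * INR (Nat.max m n)); [lra | apply Rmult_le_compat_l; lra]).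
      assert (ep * INR n <= 1 * INR n) by (apply Rmult_le_compat_r; lra).
      assert (INR m + INR n <= (r + 2) * INR n) by lra.
      assert (d1 * (INR m + INR n) <= d1 * ((r + 2) * INR n)) by (apply Rmult_le_compat_l; lra).
      assert (INR n * delta / 4 = d1 * ((r + 2) * INR n)) by (rewrite <- Hd1'; field).
      assert (INR d <= INR n * delta / 4) by lra.
      assert (INR t * INR d <= INR t * (INR n * delta / 4)) by (apply Rmult_le_compat_l; lra).
      lra. }
    assert (Hke : INR k * INR e <= INR t * INR n * delta / 4 + INR k).
    { assert (0 <= INR k) by apply pos_INR.
      assert (INR k * INR e <= INR k * (INR t * INR n * ep + 1)) by (apply Rmult_le_compat_l; lra).
      assert (INR k * ep <= delta / 4) by (unfold K in Hep2; nra).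
      assert (0 <= INR t * INR n) by (apply Rmult_le_pos; lra).
      assert (INR t * INR n * (INR k * ep) <= INR t * INR n * (delta / 4)) by (apply Rmult_le_compat_l; lra).
      lra. }
    assert (INR t * delta * 1 <= INR t * delta * INR n) by (apply Rmult_le_compat_l; nra).
    unfold K in HtK. lra.
  - intros H2 delta Hd eps He.
    destruct (H2 delta Hd) as [n [Hn HP]].
    destruct (nat_above (1 / eps)) as [k Hk].
    assert (Hk1 : 1 < eps * INR k).
    { assert (0 < / eps) by (apply Rinv_0_lt_compat; lra).
      replace 1 with (1 / eps * eps) by (field; lra). nra. }
    assert (Hk0 : (0 < k)%nat) by (destruct k; [simpl in Hk1; lra | lia]).
    set (N := (k * n)%nat).
    set (c := nat_ceil (r * INR n)).
    set (f := nat_floor (delta * INR n)).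
    set (m' := nat_floor (r * INR N)).
    assert (Hn' : 1 <= INR n) by (apply (le_INR 1); lia).
    assert (HkR : 1 <= INR k) by (apply (le_INR 1); lia).
    assert (EN : INR N = INR k * INR n) by (unfold N; apply mult_INR).
    assert (HN : INR n <= INR N) by (rewrite EN; rewrite <- (Rmult_1_l (INR n)) at 1; apply Rmult_le_compat_r; lra).
    destruct (floor_spec (r * INR N)) as [F1 F2]. apply Rmult_le_pos; lra.
    fold m' in F1, F2.
    destruct (ceil_spec (r * INR n)) as [C1 C2]. apply Rmult_le_pos; lra. fold c in C1, C2.
    destruct (floor_spec (delta * INR n)) as [G1 G2]. apply Rmult_le_pos; lra. fold f in G1, G2.
    exists m', N. split. unfold N; lia. split.
    + set (q := (r * INR N - INR m') / INR N).
      assert (Eq : INR m' / INR N - r = - q) by (unfold q; field; nra).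
      assert (Eq2 : q * INR N = r * INR N - INR m') by (unfold q; field; nra).
      rewrite Eq, Rabs_Ropp. rewrite Rabs_pos_eq.
      * nra.
      * unfold q, Rdiv. apply Rmult_le_pos; [lra | left; apply Rinv_0_lt_compat; lra].
    + exists (k * f)%nat. split.
      * rewrite mult_INR.
        assert (INR N <= INR (Nat.max m' N)) by (apply le_INR; lia). nra.
      * unfold pcm_ge. fold (P M g x y N (k * f) m').
        apply (P_mono M H1 g x y N (k * f) (k * c)); try lia.
        -- apply INR_le. rewrite mult_INR. rewrite EN in F1. nra.
        -- apply P_pow. exact HP.
Qed.
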